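(* For $c>0$ (and any $s>0$, $F>1$), at every time $t$ with $Z^t>0$, conditional on $(x^t,\lambda^t)$, $$\mathbb E[Z^t-Z^{t+1}\mid \bar A]\ge -\frac{c}{1-e^{-c}}.$$ The same bound holds with $Z^t-Z^{t+1}$ replaced by $\min\{1,Z^t-Z^{t+1}\}$.
   Context: Consider the SA-$(1,\lambda)$-EA on a dynamic monotone function: a function $f:\{0,1\}^n\to\mathbb R$ is monotone if $f(x)>f(y)$ whenever $x\ne y$ and $x_i\ge y_i$ for all $i$; $(f^t)_{t\ge0}$ is a sequence of monotone functions, $f^t$ possibly chosen adversarially depending on $x^t$. The algorithm (with constants $c>0$, $s>0$, $F>1$) maintains $x^t\in\{0,1\}^n$, real $\lambda^t\ge1$; in generation $t$ it creates $\lfloor\lambda^t\rceil$ (nearest integer) offspring $y^{t,j}$, each independently by flipping every bit of $x^t$ independently with probability $c/n$; $x^{t+1}$ is an offspring maximizing $f^t$ (ties uniformly at random); $\lambda^{t+1}=\max\{1,\lambda^t/F\}$ if $f^t(x^{t+1})>f^t(x^t)$, else $\lambda^{t+1}=F^{1/s}\lambda^t$. $Z^t$ is the number of zero-bits of $x^t$. $A$ is the event that some offspring $y^{t,j}$ flips no one-bit of $x^t$; $\bar A$ is its complement (every offspring flips at least one one-bit of $x^t$). *)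

(* Defs.v *)
From HB Require Import structures.
From mathcomp Require Import all_boot all_order all_algebra.
From mathcomp Require Import all_classical all_reals all_analysis.
Set Implicit Arguments. Unset Strict Implicit. Unset Printing Implicit Defensive.
Import Order.TTheory GRing.Theory Num.Theory.
Local Open Scope ring_scope.

Definition bits (n : nat) := {ffun 'I_n -> bool}.

Definition zeros (n : nat) (x : bits n) : nat := #|[set i | ~~ x i]|.

Definition monotone_fun (R : realType) (n : nat) (f : bits n -> R) : Prop :=
  forall x y : bits n, x <> y -> (forall i, y i ==> x i) -> f y < f x.

(* number of offspring: nearest integer of lambda (round half up) *)
Definition round_nat (R : realType) (lam : R) : nat :=
  `|Num.floor (lam + 2^-1)|%N.

(* an offspring is described by its flip mask m; offspring = x xor m *)
Definition mutate (n : nat) (x m : bits n) : bits n := [ffun i => x i (+) m i].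

Definition mask_prob (R : realType) (n : nat) (p : R) (m : bits n) : R :=
  \prod_(i < n) (if m i then p else 1 - p).

Definition family_prob (R : realType) (n k : nat) (p : R)
  (ms : {ffun 'I_k -> bits n}) : R := \prod_(j < k) mask_prob p (ms j).

Definition flips_a_one (n : nat) (x m : bits n) : bool := [exists i, x i && m i].
Definition Abar (n k : nat) (x : bits n) (ms : {ffun 'I_k -> bits n}) : bool :=
  [forall j, flips_a_one x (ms j)].

(* selection: offspring maximizing f, ties broken uniformly at random *)
Definition is_best (R : realType) (n k : nat) (f : bits n -> R) (x : bits n)
  (ms : {ffun 'I_k -> bits n}) (j : 'I_k) : bool :=
  [forall j', f (mutate x (ms j')) <= f (mutate x (ms j))].

Definition sel_prob (R : realType) (n k : nat) (f : bits n -> R) (x : bits n)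
  (ms : {ffun 'I_k -> bits n}) (j : 'I_k) : R :=
  if is_best f x ms j then (#|[set j' | is_best f x ms j']|%:R)^-1 else 0.

Definition prob_Abar (R : realType) (n k : nat) (p : R) (x : bits n) : R :=
  \sum_(ms : {ffun 'I_k -> bits n} | Abar x ms) family_prob p ms.

(* E[ g(x^t, x^{t+1}) | Abar ] for one generation from x with k offspring,
   mutation rate p and fitness f *)
Definition cond_exp_Abar (R : realType) (n k : nat) (p : R) (f : bits n -> R)
  (x : bits n) (g : bits n -> R) : R :=
  (\sum_(ms : {ffun 'I_k -> bits n} | Abar x ms)
      family_prob p ms * \sum_(j < k) sel_prob f x ms j * g (mutate x (ms j)))
  / prob_Abar k p x.

(* Main.v *)
Require Import Defs.
From HB Require Import structures.
From mathcomp Require Import all_boot all_order all_algebra.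
From mathcomp Require Import all_classical all_reals all_analysis.
From mathcomp Require Import ring lra.
Import Order.TTheory GRing.Theory Num.Theory.
Set Implicit Arguments. Unset Strict Implicit. Unset Printing Implicit Defensive.
Local Open Scope ring_scope.


Section P1.
Variable R : realType.
Variable n : nat.
Implicit Types (x m : bits n).

Lemma sum_prod_bits (F : 'I_n -> bool -> R) :
  \sum_(m : bits n) \prod_i F i (m i) = \prod_i (F i true + F i false).
Proof.
transitivity (\prod_i \sum_(b : bool) F i b).
  by rewrite bigA_distr_bigA.
by apply: eq_bigr => i _; rewrite big_bool.
Qed.

Variable p : R.
Lemma sum_mp1 : \sum_(m : bits n) mask_prob p m = 1.
Proof.
rewrite (sum_prod_bits (fun i b => if b then p else 1 - p)).
by rewrite big1 // => i _ /=; rewrite addrC subrK.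
Qed.

Lemma sum_mp_bit (i : 'I_n) : \sum_(m : bits n) mask_prob p m * (m i)%:R = p.
Proof.
transitivity (\sum_(m : bits n) \prod_l
   ((if l == i then (m l)%:R else 1) * (if m l then p else 1 - p))).
  apply: eq_bigr => m _; rewrite big_split /= mulrC; congr (_ * _).
  by rewrite (bigD1 i) //= eqxx big1 ?mulr1 // => l /negbTE ->.
rewrite (sum_prod_bits (fun l b => (if l == i then b%:R else 1) * (if b then p else 1 - p))).
rewrite (bigD1 i) //= eqxx mul1r mul0r addr0 big1 ?mulr1 // => l /negbTE -> /=.
by rewrite !mul1r addrC subrK.
Qed.

Definition nones x m : nat := #|[set i | x i && m i]|.
Definition nr x : nat := #|[set i | x i]|.

Lemma sum_mp_noflip x :
  \sum_(m : bits n | nones x m == 0%N) mask_prob p m = (1 - p) ^+ nr x.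
Proof.
transitivity (\sum_(m : bits n) \prod_l
   ((if x l then (~~ m l)%:R else 1) * (if m l then p else 1 - p))).
  rewrite big_mkcond; apply: eq_bigr => m _; rewrite big_split /=.
  case: ifP => [/eqP|] H.
    rewrite [X in X * _]big1 ?mul1r // => l _; case: (boolP (x l)) => // xl.
    case: (boolP (m l)) => // ml; move: H; rewrite /nones.
    by move/eqP; rewrite cards_eq0 => /eqP/setP/(_ l); rewrite !inE xl ml.
  have [l Hl] : exists l, x l && m l.
    apply/existsP; apply: contraFT H; rewrite negb_exists => /forallP H.
    by rewrite /nones cards_eq0; apply/eqP/setP => l; rewrite !inE (negbTE (H l)).
  case/andP: Hl => xl ml.
  by rewrite (bigD1 l) //= xl ml mul0r mul0r.
rewrite (sum_prod_bits (fun l b => (if x l then (~~ b)%:R else 1) * (if b then p else 1 - p))).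
rewrite /nr -prodr_const [RHS]big_mkcond /=; apply: eq_bigr => l _.
by rewrite inE; case: (x l) => /=; rewrite ?mul0r ?mul1r ?add0r // addrC subrK.
Qed.

Definition toggle m (i : 'I_n) : bits n := [ffun l => if l == i then ~~ m l else m l].

Lemma toggleK i : cancel (toggle ^~ i) (toggle ^~ i).
Proof. by move=> m; apply/ffunP => l; rewrite !ffunE; case: eqP => // _; rewrite negbK. Qed.

Lemma toggle_inj i : injective (toggle ^~ i).
Proof. exact: can_inj (toggleK i). Qed.

Lemma toggle_at m i : toggle m i i = ~~ m i.
Proof. by rewrite ffunE eqxx. Qed.

Lemma nones_toggle x m i : x i -> ~~ m i -> nones x (toggle m i) = (nones x m).+1.
Proof.
move=> xi mi; rewrite /nones.
have -> : [set l | x l && toggle m i l] = i |: [set l | x l && m l].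
  apply/setP => l; rewrite !inE ffunE; case: eqP => [->|_] //=.
  by rewrite xi mi.
by rewrite cardsU1 inE (negbTE mi) andbF.
Qed.

Lemma mp_toggle m i : ~~ m i -> mask_prob p (toggle m i) * (1 - p) = p * mask_prob p m.
Proof.
move=> mi; rewrite /mask_prob (bigD1 i) //= [in RHS](bigD1 i) //= toggle_at mi (negbTE mi).
rewrite mulrC mulrA [_ * p]mulrC -mulrA; congr (_ * (_ * _)).
apply: eq_bigr => l /negbTE li; by rewrite ffunE li.
Qed.

Lemma nfree x m : (nones x m + #|[set i | x i && ~~ m i]|)%N = nr x.
Proof.
rewrite /nones /nr -(cardsID [set i | m i] [set i | x i]).
by congr (_ + _)%N; apply: eq_card => l; rewrite !inE // andbC.
Qed.

Definition W (x : bits n) (g : bits n -> R) (k : nat) :=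
  \sum_(m : bits n | nones x m == k) mask_prob p m * g m.

Lemma dcount x (g : bits n -> R) k :
  (1 - p) * (k.+1)%:R * W x g k.+1 =
  p * \sum_(m : bits n | nones x m == k) mask_prob p m *
        \sum_(i | x i && ~~ m i) g (toggle m i).
Proof.
transitivity (\sum_(m : bits n) \sum_i
  (if (nones x m == k.+1) && (x i && m i) then (1 - p) * mask_prob p m * g m else 0)).
  rewrite /W mulr_sumr big_mkcond; apply: eq_bigr => m _.
  case: eqP => [Hk|_] /=; last by rewrite big1.
  rewrite -big_mkcond /= sumr_const.
  have -> : #|[pred i | x i && m i]| = nones x m by rewrite /nones cardsE.
  by rewrite Hk -mulr_natr mul1r; ring.
transitivity (\sum_(m : bits n) \sum_i
  (if (nones x m == k) && (x i && ~~ m i) then p * mask_prob p m * g (toggle m i) else 0)); last first.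
  symmetry; rewrite mulr_sumr big_mkcond; apply: eq_bigr => m _.
  case: eqP => [Hk|_] /=; last by rewrite big1.
  rewrite mulrA mulr_sumr big_mkcond; apply: eq_bigr => i _.
  by case: ifP => //; rewrite mulr0.
rewrite exchange_big [RHS]exchange_big; apply: eq_bigr => i _.
rewrite (reindex_inj (@toggle_inj i)); apply: eq_bigr => m _ /=.
rewrite toggle_at.
case: (boolP (x i)) => xi; case: (boolP (m i)) => mi; rewrite ?andbF ?andbT //=.
rewrite nones_toggle // eqSS; case: ifP => // _.
by rewrite -(mp_toggle mi); ring.
Qed.

Hypothesis p0 : 0 <= p.
Hypothesis p1 : p < 1.

Lemma mp_ge0 m : 0 <= mask_prob p m.
Proof. by apply: prodr_ge0 => i _; case: (m i) => //; rewrite subr_ge0 ltW. Qed.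

Lemma dcount_le x (g : bits n -> R) k :
  (forall m i, x i -> ~~ m i -> g (toggle m i) <= g m) ->
  (1 - p) * (k.+1)%:R * W x g k.+1 <= p * (nr x - k)%:R * W x g k.
Proof.
move=> Hg; rewrite dcount -mulrA ler_wpM2l // /W mulr_sumr ler_sum // => m /eqP Hk.
rewrite mulrCA ler_wpM2l ?mp_ge0 //.
apply: le_trans (_ : \sum_(i | x i && ~~ m i) g m <= _).
  by apply: ler_sum => i /andP[xi mi]; apply: Hg.
rewrite sumr_const -mulr_natl -(nfree x m) Hk addKn.
rewrite mulr1 -mulr_natl le_eqVlt; apply/orP; left; apply/eqP.
rewrite mulr1 mulr_natl; congr (_ *+ _); by apply: eq_card => i; rewrite inE.
Qed.

Lemma ratio (w b : nat -> R) (r : nat) :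
  (forall k, 0 <= b k) ->
  (forall k, (1 - p) * (k.+1)%:R * w k.+1 <= p * (r - k)%:R * w k) ->
  (forall k, (1 - p) * (k.+1)%:R * b k.+1 = p * (r - k)%:R * b k) ->
  forall l d, w (l + d)%N * b l <= w l * b (l + d)%N.
Proof.
move=> b0 Hw Hb l d; elim: d => [|d IH]; first by rewrite addn0.
have pos : 0 < (1 - p) * ((l + d).+1)%:R by rewrite mulr_gt0 // subr_gt0.
rewrite addnS -(ler_pM2l pos) mulrA.
apply: (le_trans (y := p * (r - (l + d))%:R * w (l + d)%N * b l)).
  by rewrite ler_wpM2r.
rewrite -mulrA (le_trans (ler_wpM2l _ IH)) ?mulr_ge0 //.
have E := Hb (l + d)%N.
have -> : p * (r - (l + d))%:R * (w l * b (l + d)%N) = w l * (p * (r - (l + d))%:R * b (l + d)%N) by ring.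
have -> : (1 - p) * (l + d).+1%:R * (w l * b (l + d).+1) = w l * ((1 - p) * (l + d).+1%:R * b (l + d).+1) by ring.
by rewrite E.
Qed.

Lemma cheb (N r : nat) (w b : nat -> R) :
  (forall k, 0 <= b k) ->
  (forall k, (1 - p) * (k.+1)%:R * w k.+1 <= p * (r - k)%:R * w k) ->
  (forall k, (1 - p) * (k.+1)%:R * b k.+1 = p * (r - k)%:R * b k) ->
  (\sum_(1 <= k < N) k%:R * w k) * (\sum_(1 <= l < N) b l) <=
  (\sum_(1 <= k < N) w k) * (\sum_(1 <= l < N) l%:R * b l).
Proof.
move=> b0 Hw Hb; have Hr := ratio b0 Hw Hb.
rewrite -subr_ge0 !mulr_suml.
set S := (X in 0 <= X).
have -> : S = \sum_(1 <= k < N) \sum_(1 <= l < N) (l%:R - k%:R) * (w k * b l).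
  rewrite /S -sumrB; apply: eq_bigr => k _.
  rewrite !mulr_sumr -sumrB; apply: eq_bigr => l _; ring.
rewrite -(@ler_pM2l _ 2%:R) // mulr0 mulr_natl mulr2n.
rewrite [X in _ <= _ + X]exchange_big -big_split /=.
apply: sumr_ge0 => k _; rewrite -big_split /=; apply: sumr_ge0 => l _.
have -> : (l%:R - k%:R) * (w k * b l) + (k%:R - l%:R) * (w l * b k)
  = (l%:R - k%:R) * (w k * b l - w l * b k) :> R by ring.
case: (leqP k l) => kl.
  apply: mulr_ge0; first by rewrite subr_ge0 ler_nat.
  by rewrite subr_ge0 -(subnKC kl); apply: Hr.
apply: mulr_le0; first by rewrite subr_le0 ler_nat ltnW.
by rewrite subr_le0 -(subnKC (ltnW kl)); apply: Hr.
Qed.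

Lemma nones_le x m : (nones x m <= n)%N.
Proof. by rewrite /nones (leq_trans (max_card _)) // card_ord. Qed.

Lemma part x (F : bits n -> R) (P : pred nat) :
  \sum_(m : bits n | P (nones x m)) F m =
  \sum_(0 <= k < n.+1 | P k) \sum_(m : bits n | nones x m == k) F m.
Proof.
transitivity (\sum_(0 <= k < n.+1) \sum_(m : bits n)
   (if P k && (nones x m == k) then F m else 0)); last first.
  rewrite [RHS]big_mkcond; apply: eq_bigr => k _.
  case: (P k) => /=; last by rewrite big1.
  by rewrite [RHS]big_mkcond.
rewrite exchange_big big_mkcond; apply: eq_bigr => m _.
rewrite (bigD1_seq (nones x m)) ?iota_uniq //=; last first.
  by rewrite mem_index_iota /= ltnS nones_le.
rewrite eqxx andbT big1 ?addr0 // => k /negbTE.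
by rewrite eq_sym => ->; rewrite andbF.
Qed.

Lemma sum_nones x : \sum_(m : bits n) mask_prob p m * (nones x m)%:R = (nr x)%:R * p.
Proof.
transitivity (\sum_(m : bits n) \sum_(i | x i) mask_prob p m * (m i)%:R).
  apply: eq_bigr => m _; rewrite -mulr_sumr; congr (_ * _).
  rewrite /nones -sum1_card natr_sum big_mkcond [RHS]big_mkcond /=; apply: eq_bigr => i _.
  by rewrite inE; case: (x i); case: (m i).
rewrite exchange_big /= (eq_bigr (fun _ => p)) => [|i _]; last exact: sum_mp_bit.
rewrite sumr_const /nr mulr_natl; congr (_ *+ _); by apply: eq_card => i; rewrite inE.
Qed.

Lemma drop0 (F : nat -> R) N :
  \sum_(0 <= k < N | (0 < k)%N) F k = \sum_(1 <= k < N) F k.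
Proof.
case: N => [|N]; first by rewrite !big_geq.
rewrite big_ltn_cond //= big_nat_cond [RHS]big_nat_cond.
by apply: eq_bigl => k; case: k => [|k] //=; rewrite ?andbT.
Qed.

Lemma W_nones x g k :
  \sum_(m : bits n | nones x m == k) mask_prob p m * g m * (nones x m)%:R = k%:R * W x g k.
Proof.
by rewrite /W mulr_sumr; apply: eq_bigr => m /eqP ->; rewrite mulrC.
Qed.

Lemma keyL x (g : bits n -> R) :
  (forall m, 0 <= g m) ->
  (forall m i, x i -> ~~ m i -> g (toggle m i) <= g m) ->
  (\sum_(m : bits n | (0 < nones x m)%N) mask_prob p m * g m * (nones x m)%:R)
    * (1 - (1 - p) ^+ nr x)
  <= (nr x)%:R * p * \sum_(m : bits n | (0 < nones x m)%N) mask_prob p m * g m.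
Proof.
move=> g0 Hg.
set b := W x (fun _ => 1).
have b0 k : 0 <= b k by apply: sumr_ge0 => m _; rewrite mulr1 mp_ge0.
have Hw k := dcount_le k Hg.
have Hb k : (1 - p) * (k.+1)%:R * b k.+1 = p * (nr x - k)%:R * b k.
  rewrite /b dcount -mulrA; congr (_ * _); rewrite mulr_sumr; apply: eq_bigr => m /eqP Hk.
  rewrite sumr_const mulrCA mulr1 -mulr_natl; congr (_ * _).
  rewrite -(nfree x m) Hk addKn mulr1; apply: f_equal; by apply: eq_card => i; rewrite inE.
have C := cheb n.+1 b0 Hw Hb.
have partT (F : bits n -> R) : \sum_(m : bits n) F m =
    \sum_(0 <= k < n.+1) \sum_(m : bits n | nones x m == k) F m.
  exact: (part x F predT).
have tot : \sum_(0 <= k < n.+1) b k = 1.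
  rewrite -(sum_mp1) partT; apply: eq_bigr => k _; apply: eq_bigr => m _; by rewrite mulr1.
have b0e : b 0%N = (1 - p) ^+ nr x.
  by rewrite -sum_mp_noflip; apply: eq_bigr => m _; rewrite mulr1.
have Sb : \sum_(1 <= l < n.+1) b l = 1 - (1 - p) ^+ nr x.
  move: tot; rewrite big_ltn // b0e => E; lra.
have Slb : \sum_(1 <= l < n.+1) l%:R * b l = (nr x)%:R * p.
  rewrite -sum_nones partT [RHS]big_ltn // [X in _ = X + _]big1 ?add0r; last by move=> m /eqP ->; rewrite mulr0.
  apply: eq_bigr => k _.
  by rewrite /b -W_nones; apply: eq_bigr => m _; rewrite mulr1.
have EX : \sum_(m : bits n | (0 < nones x m)%N) mask_prob p m * g m * (nones x m)%:R
    = \sum_(1 <= k < n.+1) k%:R * W x g k.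
  rewrite (part x _ (fun k => 0 < k)%N) drop0; apply: eq_bigr => k _; exact: W_nones.
have EY : \sum_(m : bits n | (0 < nones x m)%N) mask_prob p m * g m
    = \sum_(1 <= k < n.+1) W x g k.
  by rewrite (part x _ (fun k => 0 < k)%N) drop0.
rewrite EX EY -Sb -Slb [X in _ <= X]mulrC; exact: C.
Qed.
End P1.

Lemma geo (R : realFieldType) (s : R) (r d : nat) : 0 <= s -> s <= 1 ->
  r%:R * (1 - s ^+ (r + d)) <= (r + d)%:R * (1 - s ^+ r).
Proof.
move=> s0 s1; elim: d => [|d IH]; first by rewrite addn0.
have key : r%:R * s ^+ (r + d) * (1 - s) <= 1 - s ^+ r.
  have -> : 1 - s ^+ r = (1 - s) * \sum_(i < r) s ^+ i.
    by rewrite -opprB subrX1 -mulNr opprB.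
  rewrite mulrC ler_wpM2l ?subr_ge0 //.
  have -> : r%:R * s ^+ (r + d) = \sum_(i < r) s ^+ (r + d).
    by rewrite sumr_const card_ord mulr_natl.
  rewrite ler_sum // => i _.
  by apply: ler_wiXn2l => //; apply: leq_trans (ltnW (ltn_ord i)) (leq_addr _ _).
rewrite addnS exprS -addn1 natrD.
have E : r%:R * (1 - s * s ^+ (r + d)) = r%:R * (1 - s ^+ (r + d)) + r%:R * s ^+ (r + d) * (1 - s) by ring.
rewrite E; lra.
Qed.


Lemma nones_nr n (x m : bits n) : (nones x m <= nr x)%N.
Proof. rewrite /nones /nr; apply: subset_leq_card; apply/fintype.subsetP => i; by rewrite !inE => /andP[]. Qed.

Lemma expc_bound (R : realType) (c : R) : 0 < c -> 0 < 1 - expR (- c).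
Proof. by move=> c0; rewrite subr_gt0 expR_lt1 oppr_lt0. Qed.

Lemma Lfinal (R : realType) n (c : R) (x : bits n) (g : bits n -> R) :
  0 < c -> c <= n%:R ->
  (forall m, 0 <= g m) ->
  (forall (m : bits n) i, x i -> ~~ m i -> g (toggle m i) <= g m) ->
  \sum_(m : bits n | (0 < nones x m)%N) mask_prob (c / n%:R) m * g m * (nones x m)%:R
  <= c / (1 - expR (- c)) *
     \sum_(m : bits n | (0 < nones x m)%N) mask_prob (c / n%:R) m * g m.
Proof.
move=> c0 cn g0 Hg.
set p := c / n%:R.
have n0 : 0 < n%:R :> R by apply: lt_le_trans cn.
have p0 : 0 < p by rewrite divr_gt0.
have pl1 : p <= 1 by rewrite ler_pdivrMr // mul1r.
have D0 := expc_bound c0.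
have cB : c <= c / (1 - expR (- c)).
  rewrite ler_pdivlMr // ler_piMr ?ltW //; have := expR_gt0 (- c); lra.
set B := c / (1 - expR (- c)).
have Bge0 : 0 <= B by apply: le_trans cB; exact: ltW.
have mp0 m : 0 <= mask_prob p m.
  by apply: prodr_ge0 => i _; case: (m i); rewrite ?subr_ge0 // ltW.
have Y0 : 0 <= \sum_(m : bits n | (0 < nones x m)%N) mask_prob p m * g m.
  by apply: sumr_ge0 => m _; rewrite mulr_ge0.
set X := \sum_(m : bits n | _) _ * _ * _.
set Y := \sum_(m : bits n | _) _.
have Hnp : n%:R * p = c by rewrite /p mulrC divfK // gt_eqF.
case: (ltrP p 1) => [plt1 | pge1].
  have K := keyL (ltW p0) plt1 g0 Hg.
  have rn : (nr x <= n)%N by rewrite /nr (leq_trans (max_card _)) // card_ord.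
  case r0 : (nr x == 0%N).
    rewrite /X big1; first exact: mulr_ge0.
    move=> m Hm; exfalso.
    by move: (leq_trans Hm (nones_nr x m)); rewrite (eqP r0).
  set r := nr x in K r0 rn.
  have s0 : 0 <= 1 - p by rewrite subr_ge0.
  have s1 : 1 - p < 1 by rewrite ltrBlDr ltrDl.
  have D0' : 0 < 1 - (1 - p) ^+ r.
    by rewrite subr_gt0 exprn_ilt1 // r0.
  have sn : (1 - p) ^+ n <= expR (- c).
    rewrite -[X in expR (- X)]Hnp -[X in expR X]mulrN expRM_natl; apply: lerXn2r; rewrite ?nnegrE ?expR_ge0 //.
    by have := expR_ge1Dx (- p); lra.
  have G := @geo R (1 - p) r (n - r)%N s0 (ltW s1).
  rewrite subnKC // in G.
  have key : r%:R * p <= B * (1 - (1 - p) ^+ r).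
    rewrite /B mulrAC ler_pdivlMr //.
    apply: (le_trans (y := r%:R * p * (1 - (1 - p) ^+ n))).
      rewrite ler_wpM2l //; [apply: mulr_ge0; [exact: ler0n | exact: ltW] | lra].
    apply: (le_trans (y := p * (n%:R * (1 - (1 - p) ^+ r)))).
      have -> : r%:R * p * (1 - (1 - p) ^+ n) = p * (r%:R * (1 - (1 - p) ^+ n)) by ring.
      by rewrite ler_wpM2l // ltW.
    by rewrite -Hnp le_eqVlt; apply/orP; left; apply/eqP; ring.
  rewrite -(ler_pM2r D0') (le_trans K) //.
  have -> : B * Y * (1 - (1 - p) ^+ r) = B * (1 - (1 - p) ^+ r) * Y by ring.
  by rewrite ler_wpM2r.
have p1 : p = 1 by apply/eqP; rewrite eq_le pl1 pge1.
have cn' : c = n%:R by rewrite -Hnp p1 mulr1.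
apply: (le_trans (y := n%:R * Y)); last by rewrite ler_wpM2r // -cn'.
rewrite /X /Y mulr_sumr ler_sum // => m _.
by rewrite mulrC ler_wpM2r ?mulr_ge0 // ler_nat nones_le.
Qed.


Section Sel.
Variables (R : realType) (n k : nat) (f : bits n -> R) (x : bits n).

Lemma sel_ge0 (ms : {ffun 'I_k -> bits n}) j : 0 <= sel_prob f x ms j.
Proof. by rewrite /sel_prob; case: ifP => // _; rewrite invr_ge0 ler0n. Qed.

Lemma sel_le1 (ms : {ffun 'I_k -> bits n}) j : sel_prob f x ms j <= 1.
Proof.
rewrite /sel_prob; case: ifP => // Hj.
have c1 : (1 <= #|[set j' | is_best f x ms j']|)%N.
  by rewrite card_gt0; apply/set0Pn; exists j; rewrite inE.
by rewrite invf_le1 ?ler1n // ltr0n.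
Qed.

Lemma sum_sel_le1 (ms : {ffun 'I_k -> bits n}) : \sum_(j < k) sel_prob f x ms j <= 1.
Proof.
rewrite /sel_prob -big_mkcond /= sumr_const.
set N := #|[set j' | is_best f x ms j']|.
have -> : #|(fun j => is_best f x ms j)| = N by apply: eq_card => j; rewrite inE.
case: (posnP N) => [->|N0]; first by rewrite mulr0n.
by rewrite -[X in X <= _]mulr_natr mulVf // pnatr_eq0 -lt0n.
Qed.

Lemma sel_ext (ms1 ms2 : {ffun 'I_k -> bits n}) j :
  (forall j', f (mutate x (ms1 j')) = f (mutate x (ms2 j'))) ->
  sel_prob f x ms1 j = sel_prob f x ms2 j.
Proof.
move=> H.
have E : is_best f x ms1 =1 is_best f x ms2.
  by move=> j0; rewrite /is_best; apply: eq_forallb => j'; rewrite !H.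
rewrite /sel_prob E; congr (if _ then _^-1 else _); congr (_%:R).
by apply: eq_card => j0; rewrite !inE E.
Qed.

Definition upd (ms : {ffun 'I_k -> bits n}) (j : 'I_k) (m : bits n) : {ffun 'I_k -> bits n} :=
  [ffun j' => if j' == j then m else ms j'].

Lemma upd_at ms j m : upd ms j m j = m.
Proof. by rewrite ffunE eqxx. Qed.

Lemma upd_ne ms j m j' : j' != j -> upd ms j m j' = ms j'.
Proof. by rewrite ffunE => /negbTE ->. Qed.

Lemma sel_mono (ms : {ffun 'I_k -> bits n}) j (m m' : bits n) :
  f (mutate x m') <= f (mutate x m) ->
  sel_prob f x (upd ms j m') j <= sel_prob f x (upd ms j m) j.
Proof.
move=> H; have [lt|ge] := ltrP (f (mutate x m')) (f (mutate x m)); last first.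
  have E : f (mutate x m') = f (mutate x m) by apply/eqP; rewrite eq_le H ge.
  rewrite (@sel_ext (upd ms j m') (upd ms j m)) // => j'.
  by rewrite !ffunE; case: eqP.
case Hb: (is_best f x (upd ms j m') j); last by rewrite {1}/sel_prob Hb sel_ge0.
apply: (le_trans (sel_le1 _ _)).
move/forallP: Hb => Hb.
have B1 : forall j0, is_best f x (upd ms j m) j0 = (j0 == j).
  move=> j0; case: (eqVneq j0 j) => [->|ne].
    apply/forallP => j'; case: (eqVneq j' j) => [->//|ne'].
    rewrite upd_ne // upd_at; have := Hb j'; rewrite upd_ne // upd_at => H4.
    by apply: le_trans H4 _; apply: ltW.
  apply/negbTE/negP => /forallP /(_ j).
  rewrite upd_at upd_ne // => H2.
  have := Hb j0; rewrite upd_ne // upd_at => H3.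
  by have := le_lt_trans (le_trans H2 H3) lt; rewrite ltxx.
rewrite /sel_prob B1 eqxx.
have -> : [set j' | is_best f x (upd ms j m) j'] = [set j].
  by apply/setP => j0; rewrite !inE B1.
by rewrite cards1 invr1.
Qed.
End Sel.

Section Resample.
Variables (R : realType) (n k : nat) (p : R).

Lemma upd_upd (ms : {ffun 'I_k -> bits n}) j m : upd (upd ms j m) j (ms j) = ms.
Proof. by apply/ffunP => j'; rewrite !ffunE; case: eqP => // ->. Qed.

Lemma fp_upd (ms : {ffun 'I_k -> bits n}) j m :
  family_prob p (upd ms j m) * mask_prob p (ms j) = family_prob p ms * mask_prob p m.
Proof.
rewrite /family_prob (bigD1 j) //= [in RHS](bigD1 j) //= upd_at.
have -> : \prod_(j' < k | j' != j) mask_prob p (upd ms j m j') =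
          \prod_(j' < k | j' != j) mask_prob p (ms j').
  by apply: eq_bigr => j' ne; rewrite upd_ne.
ring.
Qed.

Lemma resample (G : {ffun 'I_k -> bits n} -> R) j :
  \sum_(ms : {ffun 'I_k -> bits n}) family_prob p ms * G ms =
  \sum_(ms : {ffun 'I_k -> bits n}) family_prob p ms *
     \sum_(m : bits n) mask_prob p m * G (upd ms j m).
Proof.
pose Phi := fun q : {ffun 'I_k -> bits n} * bits n => (upd q.1 j q.2, q.1 j).
have Phi_inv : involutive Phi.
  by case=> ms m; rewrite /Phi /= upd_upd upd_at.
transitivity (\sum_(ms : {ffun 'I_k -> bits n}) \sum_(m : bits n)
                 family_prob p ms * mask_prob p m * G ms).
  apply: eq_bigr => ms _.
  have -> : \sum_(m : bits n) family_prob p ms * mask_prob p m * G ms =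
            family_prob p ms * (\sum_(m : bits n) mask_prob p m) * G ms.
    by rewrite mulr_sumr mulr_suml.
  by rewrite sum_mp1 mulr1.
rewrite pair_bigA (reindex_inj (inv_inj Phi_inv)) /=.
transitivity (\sum_(q : {ffun 'I_k -> bits n} * bits n)
   family_prob p q.1 * mask_prob p q.2 * G (upd q.1 j q.2)).
  by apply: eq_bigr => -[ms m] _ /=; rewrite fp_upd.
rewrite -(pair_bigA _ (fun ms m => family_prob p ms * mask_prob p m * G (upd ms j m))) /=.
apply: eq_bigr => ms _; rewrite mulr_sumr; apply: eq_bigr => m _; by rewrite mulrA.
Qed.
End Resample.


Lemma flipsE n (x m : bits n) : flips_a_one x m = (0 < nones x m)%N.
Proof.
rewrite /flips_a_one /nones card_gt0; apply/existsP/set0Pn => -[i Hi]; exists i;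
  by rewrite ?inE in Hi *.
Qed.

Lemma zeros_mut n (x m : bits n) : (zeros (mutate x m) <= zeros x + nones x m)%N.
Proof.
rewrite /zeros /nones; apply: leq_trans (leq_card_setU _ _).
apply: subset_leq_card; apply/fintype.subsetP => i; rewrite !inE ffunE.
by case: (x i); case: (m i).
Qed.

Lemma mut_toggle (R : realType) n (f : bits n -> R) (x m : bits n) i :
  monotone_fun f -> x i -> ~~ m i -> f (mutate x (toggle m i)) < f (mutate x m).
Proof.
move=> Hf xi mi; apply: Hf.
  move/ffunP/(_ i); rewrite !ffunE eqxx xi; by case: (m i) mi.
move=> l; rewrite !ffunE; case: eqP => [->|_]; last by rewrite implybb.
by rewrite xi; move: mi; case: (m i).
Qed.

Section Main.
Variables (R : realType) (n k : nat) (c : R) (f : bits n -> R) (x : bits n).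
Hypotheses (c0 : 0 < c) (cn : c <= n%:R) (Hf : monotone_fun f).
Let p := c / n%:R.
Let B := c / (1 - expR (- c)).

Lemma p_bounds : 0 <= p /\ p <= 1.
Proof.
have n0 : 0 < n%:R :> R by apply: lt_le_trans cn.
by split; [rewrite divr_ge0 // ltW | rewrite ler_pdivrMr // mul1r].
Qed.

Lemma mp_nonneg (m : bits n) : 0 <= mask_prob p m.
Proof.
case: p_bounds => p0 p1.
by apply: prodr_ge0 => i _; case: (m i); rewrite ?subr_ge0.
Qed.

Lemma fp_nonneg (ms : {ffun 'I_k -> bits n}) : 0 <= family_prob p ms.
Proof. by apply: prodr_ge0 => j _; exact: mp_nonneg. Qed.

Lemma B_ge0 : 0 <= B.
Proof. by rewrite divr_ge0 ?ltW // expc_bound. Qed.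

Lemma Abar_upd (ms : {ffun 'I_k -> bits n}) j m :
  Abar x (upd ms j m) =
  flips_a_one x m && [forall j', (j' != j) ==> flips_a_one x (ms j')].
Proof.
rewrite /Abar; apply/forallP/andP => [H|[H1 /forallP H2] j'].
  split; first by have := H j; rewrite upd_at.
  by apply/forallP => j'; apply/implyP => ne; have := H j'; rewrite upd_ne.
case: (eqVneq j' j) => [->|ne]; first by rewrite upd_at.
by rewrite upd_ne //; move/implyP: (H2 j'); apply.
Qed.

Lemma perj j :
  \sum_(ms : {ffun 'I_k -> bits n} | Abar x ms)
     family_prob p ms * (sel_prob f x ms j * (nones x (ms j))%:R)
  <= B * \sum_(ms : {ffun 'I_k -> bits n} | Abar x ms)
     family_prob p ms * sel_prob f x ms j.
Proof.
have L1 : \sum_(ms : {ffun 'I_k -> bits n} | Abar x ms)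
     family_prob p ms * (sel_prob f x ms j * (nones x (ms j))%:R) =
   \sum_(ms : {ffun 'I_k -> bits n}) family_prob p ms *
   (if Abar x ms then sel_prob f x ms j * (nones x (ms j))%:R else 0).
  by rewrite big_mkcond; apply: eq_bigr => ms _; case: ifP; rewrite ?mulr0.
have L2 : \sum_(ms : {ffun 'I_k -> bits n} | Abar x ms)
     family_prob p ms * sel_prob f x ms j =
   \sum_(ms : {ffun 'I_k -> bits n}) family_prob p ms *
   (if Abar x ms then sel_prob f x ms j else 0).
  by rewrite big_mkcond; apply: eq_bigr => ms _; case: ifP; rewrite ?mulr0.
rewrite L1 L2.
rewrite (resample p _ j) [X in _ <= B * X](resample p _ j) mulr_sumr ler_sum // => ms _.
rewrite mulrCA ler_wpM2l ?fp_nonneg //.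
case Hr : [forall j', (j' != j) ==> flips_a_one x (ms j')]; last first.
  rewrite !big1 ?mulr0 // => m _; by rewrite Abar_upd Hr andbF mulr0.
have E1 : \sum_(m : bits n) mask_prob p m *
   (if Abar x (upd ms j m) then sel_prob f x (upd ms j m) j * (nones x (upd ms j m j))%:R else 0)
  = \sum_(m : bits n | (0 < nones x m)%N) mask_prob p m * sel_prob f x (upd ms j m) j * (nones x m)%:R.
  rewrite [RHS]big_mkcond; apply: eq_bigr => m _.
  by rewrite Abar_upd Hr andbT flipsE upd_at; case: ifP; rewrite ?mulr0 // mulrA.
have E2 : \sum_(m : bits n) mask_prob p m *
   (if Abar x (upd ms j m) then sel_prob f x (upd ms j m) j else 0)
  = \sum_(m : bits n | (0 < nones x m)%N) mask_prob p m * sel_prob f x (upd ms j m) j.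
  rewrite [RHS]big_mkcond; apply: eq_bigr => m _.
  by rewrite Abar_upd Hr andbT flipsE; case: ifP; rewrite ?mulr0.
rewrite E1 E2; apply: Lfinal => //.
  by move=> m; apply: sel_ge0.
move=> m i xi mi; apply: sel_mono; apply: ltW; exact: mut_toggle.
Qed.

Lemma gen (h : bits n -> R) :
  (forall m, - (nones x m)%:R <= h (mutate x m)) ->
  0 < prob_Abar k p x ->
  - B <= cond_exp_Abar k p f x h.
Proof.
move=> Hh P0; rewrite /cond_exp_Abar ler_pdivlMr //.
set P := prob_Abar k p x.
set N := \sum_(ms | _) _.
have S1 : \sum_(ms : {ffun 'I_k -> bits n} | Abar x ms) family_prob p ms *
    \sum_(j < k) sel_prob f x ms j * - (nones x (ms j))%:R <= N.
  apply: ler_sum => ms _; rewrite ler_wpM2l ?fp_nonneg //.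
  by apply: ler_sum => j _; rewrite ler_wpM2l ?sel_ge0.
have S2 : \sum_(ms : {ffun 'I_k -> bits n} | Abar x ms) family_prob p ms *
    \sum_(j < k) sel_prob f x ms j * - (nones x (ms j))%:R =
   - \sum_(j < k) \sum_(ms : {ffun 'I_k -> bits n} | Abar x ms)
       family_prob p ms * (sel_prob f x ms j * (nones x (ms j))%:R).
  rewrite exchange_big -sumrN; apply: eq_bigr => ms _.
  rewrite mulr_sumr -sumrN; apply: eq_bigr => j _; by rewrite mulrN mulrN.
have S3 : \sum_(j < k) \sum_(ms : {ffun 'I_k -> bits n} | Abar x ms)
       family_prob p ms * (sel_prob f x ms j * (nones x (ms j))%:R)
   <= B * \sum_(ms : {ffun 'I_k -> bits n} | Abar x ms) family_prob p ms *
        \sum_(j < k) sel_prob f x ms j.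
  apply: le_trans (ler_sum _ (fun j _ => perj j)) _.
  rewrite -mulr_sumr exchange_big /= ler_wpM2l ?B_ge0 //.
  by apply: ler_sum => ms _; rewrite mulr_sumr.
have S4 : \sum_(ms : {ffun 'I_k -> bits n} | Abar x ms) family_prob p ms *
        \sum_(j < k) sel_prob f x ms j <= P.
  apply: ler_sum => ms _.
  by rewrite -[X in _ <= X]mulr1 ler_wpM2l ?fp_nonneg ?sum_sel_le1.
have := ler_wpM2l B_ge0 S4; move: S1 S2 S3; set U := \sum_(ms | _) _ * \sum_(j < k) _ * _.
move=> S1 S2 S3 S5; rewrite S2 in S1.
rewrite mulNr; lra.
Qed.
End Main.


Unset Implicit Arguments.
Theorem mainTheorem9 (R : realType) (n : nat) (c s F lam : R)
  (x : bits n) (f : bits n -> R) :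
  0 < c -> c <= n%:R -> 0 < s -> 1 < F -> 1 <= lam ->
  monotone_fun f ->
  (0 < zeros x)%N ->
  0 < prob_Abar (round_nat lam) (c / n%:R) x ->
  - (c / (1 - expR (- c))) <=
    cond_exp_Abar (round_nat lam) (c / n%:R) f x
      (fun y => (zeros x)%:R - (zeros y)%:R)
  /\
  - (c / (1 - expR (- c))) <=
    cond_exp_Abar (round_nat lam) (c / n%:R) f x
      (fun y => Num.min 1 ((zeros x)%:R - (zeros y)%:R)).
Proof.
move=> c0 cn _ _ _ Hf _ P0.
have H m : - (nones x m)%:R <= (zeros x)%:R - (zeros (mutate x m))%:R :> R.
  have := zeros_mut x m; rewrite -(ler_nat R) natrD; lra.
split; apply: gen => // m.
rewrite le_min H andbT.
by apply: le_trans (_ : 0 <= 1) => //; rewrite oppr_le0 ler0n.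
Qed.
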